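(* Let $P$ be a poset, let $\mathbf{Ch}_P$ be the full subcategory of $\mathbf{Pos}_{in}$ whose objects are the chains of $P$, and let $\mathcal{F}_P:\mathbf{Ch}_P\to\mathbf{Pos}$ be the inclusion functor (the diagram of chains of $P$). Then $\operatorname{colim}\mathcal{F}_P=P$ in $\mathbf{Pos}$.
   Context: $\mathbf{Pos}$ is the category of posets and order-preserving maps; $\mathbf{Pos}_{in}$ is its wide subcategory whose morphisms are the order-preserving inclusions. A chain of $P$ is a totally ordered sub-poset of $P$ (with the induced order); morphisms in $\mathbf{Ch}_P$ are the inclusions between chains. *)

(* Defs.v *)
From HB Require Import structures.
From mathcomp Require Import all_boot all_order.
Set Implicit Arguments. Unset Strict Implicit. Unset Printing Implicit Defensive.
Import Order.TTheory.
Local Open Scope order_scope.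

Record chain (d : Order.disp_t) (P : porderType d) := Chain {
  chain_set :> P -> Prop;
  chain_total : forall x y : P, chain_set x -> chain_set y -> (x <= y) || (y <= x)
}.

Definition chain_elt d (P : porderType d) (C : chain P) := {x : P | C x}.

(* Morphisms of Ch_P: inclusions C ⊆ D; the induced map C -> D. *)
Definition chain_incl d (P : porderType d) (C D : chain P) :=
  forall x : P, C x -> D x.

Definition incl_map d (P : porderType d) (C D : chain P) (h : chain_incl C D)
  (x : chain_elt C) : chain_elt D := exist _ (proj1_sig x) (h _ (proj2_sig x)).

Definition is_cocone d (P : porderType d) d' (Q : porderType d')
  (f : forall C : chain P, chain_elt C -> Q) : Prop :=
  (forall (C : chain P) (x y : chain_elt C),
      proj1_sig x <= proj1_sig y -> f C x <= f C y) /\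
  (forall (C D : chain P) (h : chain_incl C D) (x : chain_elt C),
      f D (incl_map h x) = f C x).

Definition is_colimit_of_chains d (P : porderType d) d0 (A : porderType d0)
  (iota : forall C : chain P, chain_elt C -> A) : Prop :=
  is_cocone iota /\
  forall d' (Q : porderType d') (f : forall C : chain P, chain_elt C -> Q),
    is_cocone f ->
    exists! g : A -> Q,
      {homo g : x y / x <= y} /\ forall (C : chain P) (x : chain_elt C), g (iota C x) = f C x.

Definition chain_inclusion d (P : porderType d) (C : chain P) (x : chain_elt C) : P :=
  proj1_sig x.

(* Main.v *)
Require Import Defs.
From mathcomp Require Import all_boot all_order.
From Stdlib Require Import ProofIrrelevance FunctionalExtensionality.
Import Order.TTheory.
Set Implicit Arguments.
Local Open Scope order_scope.

Section S.
Variables (d : Order.disp_t) (P : porderType d).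

Definition sing (x : P) : chain P.
Proof. refine (@Chain d P (fun z => z = x) _). by move=> a b -> ->; rewrite lexx. Defined.

Definition pair2 (x y : P) (hxy : x <= y) : chain P.
Proof.
refine (@Chain d P (fun z => z = x \/ z = y) _).
move=> a b [->|->] [->|->]; by rewrite ?lexx ?hxy ?orbT.
Defined.

Lemma cocone_pi d' (Q : porderType d') (f : forall C : chain P, chain_elt C -> Q)
  (hf : is_cocone f) (C D : chain P) (x : P) (p : C x) (q : D x) :
  chain_incl C D -> f D (exist _ x q) = f C (exist _ x p).
Proof.
move=> h; case: hf => _ hc; rewrite -(hc C D h (exist _ x p)) /incl_map /=.
by rewrite (proof_irrelevance _ q (h x p)).
Qed.
End S.
Arguments sing {d P} x.
Arguments pair2 {d P} x y hxy.
Arguments cocone_pi {d P d' Q f} hf {C D x} p q _.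

Theorem proposition6p1 (d : Order.disp_t) (P : porderType d) :
  is_colimit_of_chains (@chain_inclusion d P).
Proof.
split.
  split; first by move=> C x y.
  by move=> C D h x.
move=> d' Q f hf.
exists (fun x : P => f (sing x) (exist _ x (erefl x))).
split.
  split.
    move=> x y hxy.
    have px : pair2 x y hxy x by left.
    have py : pair2 x y hxy y by right.
    have i1 : chain_incl (sing x) (pair2 x y hxy) by move=> z /= ->; left.
    have i2 : chain_incl (sing y) (pair2 x y hxy) by move=> z /= ->; right.
    rewrite -(cocone_pi hf (C:=sing x) (erefl x) px i1) -(cocone_pi hf (C:=sing y) (erefl y) py i2).
    by case: hf => hm _; exact: (hm (pair2 x y hxy) (exist _ x px) (exist _ y py) hxy).
  move=> C [x p] /=; rewrite /chain_inclusion /=.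
  symmetry; apply: (cocone_pi hf (C:=sing x) (erefl x) p) => z /= ->; exact p.
move=> g' [_ hg']; apply: functional_extensionality => x.
by rewrite -(hg' (sing x) (exist _ x (erefl x))).
Qed.
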